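(* Let $F,\tilde F$ be finitely supported sequences on $\mathbb Z$ whose supports lie entirely to the left of the supports of finitely supported sequences $G,\tilde G$ (i.e. every index in the support of $F$ or $\tilde F$ is smaller than every index in the support of $G$ or $\tilde G$). Let $(a,b),(\tilde a,\tilde b),(c,d),(\tilde c,\tilde d)$ be the nonlinear Fourier series of $F,\tilde F,G,\tilde G$ respectively. Then $$\rho\bigl((a,b)(c,d),(\tilde a,\tilde b)(\tilde c,\tilde d)\bigr)\le 2\rho\bigl((a,b),(\tilde a,\tilde b)\bigr)+2\rho\bigl((c,d),(\tilde c,\tilde d)\bigr).$$
   Context: $\mathbb T$ is the unit circle, $\mathbb D$ the open unit disc, $\mathbb D^*=\{\overline z^{-1}:z\in\mathbb D\}$ (including $\infty$), and $a^*(z)=\overline{a(\overline z^{-1})}$ (so $a^*=\overline a$ on $\mathbb T$). $\int_{\mathbb T}a=\int_0^1a(e^{2\pi i\theta})d\theta$. $H^2(\mathbb D)$ is the space of $f\in L^2(\mathbb T)$ whose Fourier coefficients vanish at negative indices; $H^2(\mathbb D^* )$ is the space of $f$ with $f^*\in H^2(\mathbb D)$, and for such $f$, $f(\infty):=\overline{f^*(0)}=\int_{\mathbb T}f$. For a finitely supported $F$, its nonlinear Fourier series $(a,b)$ is the first row of the ordered product $\prod_k(1+|F_k|^2)^{-1/2}\begin{pmatrix}1&F_kz^k\\-\overline{F_k}z^{-k}&1\end{pmatrix}$ ($k$ increasing left to right). Pairs are multiplied as $(a,b)(c,d)=(ac-bd^*,ad+bc^* )$ (the first row of the product of the matrices $\begin{pmatrix}a&b\\-b^*&a^*\end{pmatrix}\begin{pmatrix}c&d\\-d^*&c^*\end{pmatrix}$).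 $\mathbf L$ is the set of pairs $(a,b)$ of measurable functions on $\mathbb T$ with $aa^*+bb^*=1$ a.e. on $\mathbb T$, $a\in H^2(\mathbb D^* )$ and $a(\infty)>0$; it carries the metric $\rho((a,b),(c,d))=\|a-c\|_{L^2(\mathbb T)}+\|b-d\|_{L^2(\mathbb T)}+|\log a(\infty)-\log c(\infty)|$. Nonlinear Fourier series of finitely supported sequences lie in $\mathbf L$. *)

(* Defs.v *)
From HB Require Import structures.
From mathcomp Require Import all_boot all_order all_algebra.
From mathcomp Require Import all_classical all_reals all_analysis.
From mathcomp Require Import complex.
Set Implicit Arguments. Unset Strict Implicit. Unset Printing Implicit Defensive.
Import Order.TTheory GRing.Theory Num.Theory.
Import numFieldNormedType.Exports.
Local Open Scope ring_scope.
Local Open Scope complex_scope.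

Section NLFT.
Variable R : realType.
Local Notation C := R[i].

Definition reC (x : C) : R := let: a +i* _ := x in a.
Definition imC (x : C) : R := let: _ +i* b := x in b.

Definition abs2 (x : C) : R := (reC x) ^+ 2 + (imC x) ^+ 2.

Definition supported_in (N : nat) (F : int -> C) : Prop :=
  forall k : int, (N < `|k|)%N -> F k = 0.

Definition supp_left (F G : int -> C) : Prop :=
  forall j k : int, F j <> 0 -> G k <> 0 -> j < k.

Definition nlft_factor (Fk : C) (k : int) (z : C) : 'M[C]_2 :=
  ((Num.sqrt (1 + abs2 Fk))^-1)%:C *:
    \matrix_(i < 2, j < 2)
      (if (i == 0) && (j == 0) then 1
       else if (i == 0) then Fk * z ^ k
       else if (j == 0) then - (conjc Fk) * z ^ (- k)
       else 1).

(* ordered product over k = -N, ..., N (k increasing from left to right);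
   factors with F_k = 0 are the identity, so this is the ordered product
   over the support whenever F is supported in [-N, N]. *)
Definition nlft_mat (N : nat) (F : int -> C) (z : C) : 'M[C]_2 :=
  \prod_(i < (N + N).+1) nlft_factor (F (i%:Z - N%:Z)) (i%:Z - N%:Z) z.

Definition nlft (N : nat) (F : int -> C) : (C -> C) * (C -> C) :=
  (fun z => nlft_mat N F z 0 0, fun z => nlft_mat N F z 0 1).

Definition fstar (f : C -> C) : C -> C := fun z => conjc (f (conjc z)^-1).

Definition pairmul (p q : (C -> C) * (C -> C)) : (C -> C) * (C -> C) :=
  let: (a, b) := p in let: (c, d) := q in
  (fun z => a z * c z - b z * fstar d z, fun z => a z * d z + b z * fstar c z).

Definition eT (t : R) : C := (cos (2 * pi * t)) +i* (sin (2 * pi * t)).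

Definition unit_interval : set R := [set t : R | 0 <= t <= 1].

Definition intT (f : C -> C) : C :=
  (\int[lebesgue_measure]_(t in unit_interval) reC (f (eT t))) +i*
  (\int[lebesgue_measure]_(t in unit_interval) imC (f (eT t))).

Definition L2T (f : C -> C) : R :=
  Num.sqrt (\int[lebesgue_measure]_(t in unit_interval) abs2 (f (eT t))).

(* a(infinity) := int_T a (a positive real number for elements of L) *)
Definition at_infty (a : C -> C) : C := intT a.

Definition rho (p q : (C -> C) * (C -> C)) : R :=
  let: (a, b) := p in let: (c, d) := q in
  L2T (fun z => a z - c z) + L2T (fun z => b z - d z)
  + `| ln (reC (at_infty a)) - ln (reC (at_infty c)) |.

End NLFT.

(* Main.v *)
Require Import Defs.
From HB Require Import structures.
From mathcomp Require Import all_boot all_order all_algebra.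
From mathcomp Require Import all_classical all_reals all_analysis.
From mathcomp Require Import complex.
From mathcomp Require Import ring lra zify.
Set Implicit Arguments. Unset Strict Implicit. Unset Printing Implicit Defensive.
Import Order.TTheory GRing.Theory Num.Theory.
Import numFieldNormedType.Exports.
Local Open Scope ring_scope.
Local Open Scope complex_scope.

Section S.
Variable R : realType.
Local Notation C := R[i].
Notation mu := (@lebesgue_measure R).
Lemma unit_intervalE : @unit_interval R = `[0%R, 1%R]%classic :> set R.
Proof.
by apply/funext => t; apply/propext; rewrite /unit_interval /= in_itv /=.
Qed.

Lemma mu01 : mu `[0%R, 1%R]%classic = 1%E.
Proof. by rewrite lebesgue_measure_itv /= lte_fin ltr01 -EFinD subr0. Qed.

Lemma sincos2pin (n : nat) : sin (n%:R * (2 * pi)) = 0 :> R /\ cos (n%:R * (2 * pi)) = 1 :> R.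
Proof.
have -> : n%:R * (2 * pi) = 0 + (pi *+ 2) *+ n :> R by rewrite add0r -mulr_natl; ring.
by rewrite (periodicn (@sinD2pi R)) (periodicn (@cosD2pi R)) sin0 cos0.
Qed.

Lemma sincos2pie (e : int) : sin (e%:~R * (2 * pi)) = 0 :> R /\ cos (e%:~R * (2 * pi)) = 1 :> R.
Proof.
case: e => n; first exact: sincos2pin.
rewrite NegzE mulrNz mulNr sinN cosN.
have [-> ->] := sincos2pin n.+1; split => //; by rewrite oppr0.
Qed.

Lemma der_lin (w x : R) : is_derive x 1 (fun t : R => w * t) w.
Proof.
have H := @is_deriveZ R R R^o id w x 1 1 (is_derive_id x 1).
have E : w *: (1 : R^o) = w by rewrite -[LHS]/(w * 1) mulr1.
rewrite E in H; apply: (near_eq_is_derive _ H).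
by near=> y.
Unshelve. all: by end_near.
Qed.

Lemma der_cosw (w x : R) : is_derive x 1 (fun t : R => cos (w * t)) (- sin (w * x) * w).
Proof.
have := @is_derive1_comp R cos (fun t => w * t) x _ _ _ (der_lin w x).
move=> H; exact: H.
Qed.
Lemma der_sinw (w x : R) : is_derive x 1 (fun t : R => sin (w * t)) (cos (w * x) * w).
Proof.
have := @is_derive1_comp R sin (fun t => w * t) x _ _ _ (der_lin w x).
move=> H; exact: H.
Qed.

Definition trig (w a b : R) := fun t : R => a * cos (w * t) + b * sin (w * t).

Lemma der_trig (w a b x : R) : is_derive x 1 (trig w a b) (w * (b * cos (w * x) - a * sin (w * x))).
Proof.
have H1 := is_deriveM (is_derive_cst a x 1) (der_cosw w x).
have H2 := is_deriveM (is_derive_cst b x 1) (der_sinw w x).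
have H := is_deriveD H1 H2.
have H' : is_derive x 1 (trig w a b) ((cst a x *: (- sin (w * x) * w) + cos (w * x) *: 0)
   + (cst b x *: (cos (w * x) * w) + sin (w * x) *: 0)).
  by apply: (near_eq_is_derive _ H); near=> y.
apply: (is_derive_eq H'); rewrite /cst /= /GRing.scale /=; ring.
Unshelve. all: by end_near.
Qed.

Lemma trig_cont (w a b : R) : continuous (trig w a b).
Proof.
move=> x; apply/differentiable_continuous/derivable1_diffP.
by have [] := der_trig w a b x.
Qed.
Lemma int_trig (e : int) (a b : R) :
  mu.-integrable `[0%R, 1%R]%classic (EFin \o trig (e%:~R * (2 * pi)) a b) /\
  \int[mu]_(t in `[0%R, 1%R]%classic) trig (e%:~R * (2 * pi)) a b t = (if e == 0 then a else 0).
Proof.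
split.
  apply: continuous_compact_integrable; first exact: segment_compact.
  exact/continuous_subspaceT/trig_cont.
have [->|e0] := eqVneq e 0.
  rewrite (@eq_Rintegral _ _ _ _ _ (fun _ => a)); last first.
    by move=> t _; rewrite /trig mul0r !mul0r cos0 sin0 mulr1 mulr0 addr0.
  by rewrite Rintegral_cst //= mu01 /=; exact: mulr1.
set w := (e%:~R * (2 * pi) : R).
have w0 : w != 0.
  by rewrite /w mulf_neq0 ?intr_eq0 // mulf_neq0 ?pnatr_eq0 //; apply: lt0r_neq0; exact: pi_gt0.
rewrite /Rintegral (@continuous_FTC2 _ _ (trig w (- b / w) (a / w))) ?ltr01 //.
- rewrite /trig !mulr1 !mulr0 cos0 sin0.
  by have [-> ->] := sincos2pie e; rewrite -EFinB subrr.
- by apply: continuous_subspaceT => x; exact: trig_cont.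
- split.
  + by move=> x _; have [] := der_trig w (- b / w) (a / w) x.
  + by apply: cvg_at_right_filter; exact: trig_cont.
  + by apply: cvg_at_left_filter; exact: trig_cont.
- move=> x _; rewrite derive1E; have [_ ->] := der_trig w (- b / w) (a / w) x.
  by rewrite /trig; field.
Qed.
Definition cis (x : R) : C := cos x +i* sin x.

Lemma reCD (x y : C) : reC (x + y) = reC x + reC y. Proof. by case: x; case: y. Qed.
Lemma imCD (x y : C) : imC (x + y) = imC x + imC y. Proof. by case: x; case: y. Qed.
Lemma reCM (x y : C) : reC (x * y) = reC x * reC y - imC x * imC y. Proof. by case: x; case: y. Qed.
Lemma imCM (x y : C) : imC (x * y) = reC x * imC y + imC x * reC y. Proof. by case: x; case: y. Qed.
Lemma reCR (r : R) : reC r%:C = r. Proof. by []. Qed.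
Lemma imCR (r : R) : imC r%:C = 0. Proof. by []. Qed.

Lemma cisD x y : cis x * cis y = cis (x + y).
Proof. rewrite /cis cosD sinD /=; congr Complex; ring. Qed.

Lemma cis0 : cis 0 = 1.
Proof. by rewrite /cis cos0 sin0. Qed.

Lemma cis_neq0 x : cis x != 0.
Proof.
apply/negP => /eqP H; have := cos2Dsin2 x.
by move: H; rewrite /cis => -[-> ->]; rewrite expr0n /= addr0 => /eqP; rewrite eq_sym oner_eq0.
Qed.

Lemma cisV x : (cis x)^-1 = cis (- x).
Proof.
apply: (mulfI (cis_neq0 x)); rewrite mulfV ?cis_neq0 // cisD subrr cis0 //.
Qed.

Lemma cisXn x (n : nat) : cis x ^+ n = cis (n%:R * x).
Proof.
elim: n => [|n IH]; first by rewrite expr0 mul0r cis0.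
by rewrite exprS IH cisD -natr1 mulrDl mul1r addrC.
Qed.

Lemma cisX x (e : int) : cis x ^ e = cis (e%:~R * x).
Proof.
case: e => n; first by rewrite -exprnP cisXn.
have -> : cis x ^ Negz n = (cis x ^+ n.+1)^-1 by [].
rewrite cisXn cisV NegzE mulrNz mulNr //.
Qed.

Lemma conj_cis x : conjc (cis x) = cis (- x).
Proof. by rewrite /cis cosN sinN. Qed.

Lemma abs2E (x : C) : (abs2 x)%:C = x * conjc x.
Proof. case: x => a b /=; rewrite /abs2 /=; congr Complex; ring. Qed.


Lemma eTE t : eT t = cis (2 * pi * t). Proof. by []. Qed.

Definition ev (s : seq (C * int)) (t : R) : C := \sum_(x <- s) x.1 * eT t ^ x.2.

Lemma reC_mono (c : C) (e : int) t :
  reC (c * eT t ^ e) = trig (e%:~R * (2 * pi)) (reC c) (- imC c) t.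
Proof. by rewrite eTE cisX reCM /trig /= mulrA mulNr. Qed.

Lemma reC0 : reC 0 = 0 :> R. Proof. by []. Qed.

Lemma ev_int (s : seq (C * int)) :
  mu.-integrable `[0%R, 1%R]%classic (EFin \o (fun t => reC (ev s t))) /\
  \int[mu]_(t in `[0%R, 1%R]%classic) reC (ev s t) = \sum_(x <- s | x.2 == 0) reC x.1.
Proof.
elim: s => [|x s [IHi IHv]].
  have E : (fun t => reC (ev [::] t)) = cst 0.
    by apply/funext => t; rewrite /ev big_nil.
  rewrite E big_nil; split; first exact: integrable0.
  by rewrite Rintegral_cst //= mul0r.
have E : (fun t => reC (ev (x :: s) t)) =
   (fun t => trig (x.2%:~R * (2 * pi)) (reC x.1) (- imC x.1) t + reC (ev s t)).
  by apply/funext => t; rewrite /ev big_cons reCD reC_mono.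
have [Ti Tv] := int_trig x.2 (reC x.1) (- imC x.1).
rewrite E big_cons; split.
  have -> : (EFin \o (fun t => trig (x.2%:~R * (2 * pi)) (reC x.1) (- imC x.1) t + reC (ev s t)))
    = (EFin \o trig (x.2%:~R * (2 * pi)) (reC x.1) (- imC x.1)) \+ (EFin \o (fun t => reC (ev s t))).
    by apply/funext.
  exact: integrableD.
rewrite RintegralD // Tv IHv; case: eqP => _ //; by rewrite add0r.
Qed.

Lemma eTX (t : R) (e : int) : eT t ^ e = cis (e%:~R * (2 * pi * t)).
Proof. by rewrite eTE cisX. Qed.

Lemma eTXD (t : R) (e1 e2 : int) : eT t ^ (e1 + e2) = eT t ^ e1 * eT t ^ e2.
Proof. by rewrite !eTX cisD intrD mulrDl. Qed.

Lemma eTXJ (t : R) (e : int) : conjc (eT t ^ e) = eT t ^ (- e).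
Proof. by rewrite !eTX conj_cis mulrNz mulNr. Qed.

Lemma eTV (t : R) : (conjc (eT t))^-1 = eT t.
Proof. by rewrite eTE conj_cis cisV opprK. Qed.

Definition sh (c : C) (e : int) (s : seq (C * int)) := [seq (c * x.1, x.2 + e) | x <- s].
Definition pm (s1 s2 : seq (C * int)) := flatten [seq sh x.1 x.2 s2 | x <- s1].
Definition cj (s : seq (C * int)) := [seq (conjc x.1, - x.2) | x <- s].

Lemma ev_nil t : ev [::] t = 0. Proof. by rewrite /ev big_nil. Qed.
Lemma ev_cat s1 s2 t : ev (s1 ++ s2) t = ev s1 t + ev s2 t.
Proof. by rewrite /ev big_cat. Qed.
Lemma ev_cst c t : ev [:: (c, 0)] t = c.
Proof. by rewrite /ev big_cons big_nil expr0z mulr1 addr0. Qed.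
Lemma ev_sh c e s t : ev (sh c e s) t = c * eT t ^ e * ev s t.
Proof.
rewrite /ev /sh big_map mulr_sumr; apply: eq_bigr => x _ /=.
by rewrite eTXD; ring.
Qed.
Lemma ev_pm s1 s2 t : ev (pm s1 s2) t = ev s1 t * ev s2 t.
Proof.
elim: s1 => [|x s1 IH]; first by rewrite /pm /= ev_nil mul0r.
by rewrite /pm /= ev_cat -/(pm s1 s2) IH ev_sh /ev big_cons mulrDl.
Qed.
Lemma ev_cj s t : ev (cj s) t = conjc (ev s t).
Proof.
rewrite /ev /cj big_map rmorph_sum; apply: eq_bigr => x _ /=.
by rewrite rmorphM /= eTXJ.
Qed.

Lemma abs2_ge0 (x : C) : 0 <= abs2 x.
Proof. by rewrite /abs2 addr_ge0 // sqr_ge0. Qed.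
Lemma abs2_add (x y : C) : abs2 (x + y) = abs2 x + 2 * reC (x * conjc y) + abs2 y.
Proof. case: x => a b; case: y => c d; rewrite /abs2 /=; ring. Qed.
Lemma abs2_conj (x : C) : abs2 (conjc x) = abs2 x.
Proof. case: x => a b; rewrite /abs2 /=; ring. Qed.
Lemma abs2_mul (x y : C) : abs2 (x * y) = abs2 x * abs2 y.
Proof. case: x => a b; case: y => c d; rewrite /abs2 /=; ring. Qed.
Lemma abs2_opp (x : C) : abs2 (- x) = abs2 x.
Proof. case: x => a b; rewrite /abs2 /=; ring. Qed.
Lemma abs2_re (x : C) : abs2 x = reC (x * conjc x).
Proof. case: x => a b; rewrite /abs2 /=; ring. Qed.
Lemma cross_le (mu' : R) (x y : C) : 0 < mu' ->
  2 * reC (x * conjc y) <= mu' * abs2 x + mu'^-1 * abs2 y.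
Proof.
move=> m0; case: x => a b; case: y => c d; rewrite /abs2 /=.
have H : 0 <= (mu' * a - c) ^+ 2 + (mu' * b - d) ^+ 2 by rewrite addr_ge0 // sqr_ge0.
rewrite -subr_ge0.
have -> : mu' * (a ^+ 2 + b ^+ 2) + mu'^-1 * (c ^+ 2 + d ^+ 2) - 2 * (a * c - b * - d)
   = mu'^-1 * ((mu' * a - c) ^+ 2 + (mu' * b - d) ^+ 2).
  by field; rewrite gt_eqF.
by rewrite mulr_ge0 // invr_ge0 ltW.
Qed.

Definition Rep (u : R -> C) := exists s, forall t, u t = ev s t.
Definition nice (f : R -> R) := exists s, forall t, f t = reC (ev s t).
Definition J (f : R -> R) := \int[mu]_(t in `[0%R, 1%R]%classic) f t.
Definition Q (u : R -> C) := J (fun t => abs2 (u t)).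

Lemma nice_int f : nice f -> mu.-integrable `[0%R, 1%R]%classic (EFin \o f).
Proof.
case=> s Hs; have -> : f = (fun t => reC (ev s t)) by apply/funext.
by have [] := ev_int s.
Qed.

Lemma J_ext f g : (forall t, f t = g t) -> J f = J g.
Proof. by move=> H; have -> : f = g by apply/funext. Qed.

Lemma JD f g : nice f -> nice g -> J (fun t => f t + g t) = J f + J g.
Proof. by move=> nf ng; rewrite /J RintegralD //; exact: nice_int. Qed.

Lemma JZ k f : nice f -> J (fun t => k * f t) = k * J f.
Proof. by move=> nf; rewrite /J RintegralZl //; exact: nice_int. Qed.

Lemma Jle f g : nice f -> nice g -> (forall t, f t <= g t) -> J f <= J g.
Proof. by move=> nf ng H; rewrite /J le_Rintegral //; exact: nice_int. Qed.

Lemma Jge0 f : (forall t, 0 <= f t) -> 0 <= J f.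
Proof. by move=> H; rewrite /J Rintegral_ge0. Qed.

Lemma RepD u v : Rep u -> Rep v -> Rep (fun t => u t + v t).
Proof. by case=> s1 H1 [s2 H2]; exists (s1 ++ s2) => t; rewrite ev_cat H1 H2. Qed.
Lemma RepM u v : Rep u -> Rep v -> Rep (fun t => u t * v t).
Proof. by case=> s1 H1 [s2 H2]; exists (pm s1 s2) => t; rewrite ev_pm H1 H2. Qed.
Lemma RepJ u : Rep u -> Rep (fun t => conjc (u t)).
Proof. by case=> s1 H1; exists (cj s1) => t; rewrite ev_cj H1. Qed.
Lemma Rep_cst c : Rep (fun _ => c).
Proof. by exists [:: (c, 0)] => t; rewrite ev_cst. Qed.
Lemma RepN u : Rep u -> Rep (fun t => - u t).
Proof.
move=> Hu; have := RepM (Rep_cst (-1)) Hu; case=> s Hs; exists s => t.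
by rewrite -Hs mulN1r.
Qed.
Lemma RepB u v : Rep u -> Rep v -> Rep (fun t => u t - v t).
Proof. by move=> Hu Hv; apply: RepD => //; exact: RepN. Qed.

Lemma nice_re u : Rep u -> nice (fun t => reC (u t)).
Proof. by case=> s Hs; exists s => t; rewrite Hs. Qed.
Lemma nice_abs2 u : Rep u -> nice (fun t => abs2 (u t)).
Proof.
move=> Hu; have [s Hs] := RepM Hu (RepJ Hu); exists s => t.
by rewrite abs2_re Hs.
Qed.
Lemma nice_cross u v : Rep u -> Rep v -> nice (fun t => reC (u t * conjc (v t))).
Proof. by move=> Hu Hv; apply: nice_re; apply: RepM => //; exact: RepJ. Qed.

Lemma Q_ge0 u : 0 <= Q u.
Proof. by apply: Jge0 => t; exact: abs2_ge0. Qed.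

Lemma Q_ext u v : (forall t, abs2 (u t) = abs2 (v t)) -> Q u = Q v.
Proof. by move=> H; apply: J_ext. Qed.

Lemma nice_sc k f : nice f -> nice (fun t => k * f t).
Proof.
by case=> s Hs; exists (sh k%:C 0 s) => t; rewrite ev_sh expr0z mulr1 reCM -Hs /=; ring.
Qed.
Lemma nice_D f g : nice f -> nice g -> nice (fun t => f t + g t).
Proof. by case=> s1 H1 [s2 H2]; exists (s1 ++ s2) => t; rewrite ev_cat reCD H1 H2. Qed.

Lemma Q_add u v : Rep u -> Rep v ->
  Q (fun t => u t + v t) = Q u + 2 * J (fun t => reC (u t * conjc (v t))) + Q v.
Proof.
move=> Hu Hv; rewrite /Q.
rewrite (J_ext (g := fun t => (abs2 (u t) + 2 * reC (u t * conjc (v t))) + abs2 (v t))); last first.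
  by move=> t; rewrite abs2_add.
have n1 := nice_abs2 Hu; have n2 := nice_abs2 Hv; have n3 := nice_cross Hu Hv.
rewrite JD; [|exact: nice_D n1 (nice_sc 2 n3)|exact: n2].
by rewrite JD ?JZ //; exact: nice_sc.
Qed.

Lemma Q_cross u v (m : R) : Rep u -> Rep v -> 0 < m ->
  2 * J (fun t => reC (u t * conjc (v t))) <= m * Q u + m^-1 * Q v.
Proof.
move=> Hu Hv m0; have n1 := nice_abs2 Hu; have n2 := nice_abs2 Hv; have n3 := nice_cross Hu Hv.
rewrite /Q -(JZ 2 n3) -(JZ m n1) -(JZ m^-1 n2) -JD; [|exact: nice_sc|exact: nice_sc].
apply: Jle; [exact: nice_sc|exact: nice_D (nice_sc _ n1) (nice_sc _ n2)|].
by move=> t; exact: cross_le.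
Qed.

Lemma cs_real (a c B : R) : 0 <= a -> 0 <= c ->
  (forall m, 0 < m -> 2 * B <= m * a ^+ 2 + m^-1 * c ^+ 2) -> B <= a * c.
Proof.
move=> a0 c0 H; rewrite leNgt; apply/negP => hB.
have B0 : 0 < B by apply: le_lt_trans hB; rewrite mulr_ge0.
have [a0'|ap] := eqVneq a 0.
  have m0 : 0 < (c ^+ 2 + 1) / B by rewrite divr_gt0 // ltr_pwDr // sqr_ge0.
  have := H _ m0; rewrite a0' expr0n /= mulr0 add0r invf_div.
  have k0 : 0 < c ^+ 2 + 1 by rewrite ltr_pwDr // sqr_ge0.
  have -> : B / (c ^+ 2 + 1) * c ^+ 2 = B - B / (c ^+ 2 + 1) by field; rewrite gt_eqF.
  have : 0 < B / (c ^+ 2 + 1) by rewrite divr_gt0.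
  lra.
have [c0'|cp] := eqVneq c 0.
  have m0 : 0 < B / (a ^+ 2 + 1) by rewrite divr_gt0 // ltr_pwDr // sqr_ge0.
  have := H _ m0; rewrite c0' expr0n /= mulr0 addr0.
  have k0 : 0 < a ^+ 2 + 1 by rewrite ltr_pwDr // sqr_ge0.
  have -> : B / (a ^+ 2 + 1) * a ^+ 2 = B - B / (a ^+ 2 + 1) by field; rewrite gt_eqF.
  have : 0 < B / (a ^+ 2 + 1) by rewrite divr_gt0.
  lra.
have ap' : 0 < a by rewrite lt0r ap.
have cp' : 0 < c by rewrite lt0r cp.
have := H (c / a) (divr_gt0 cp' ap').
have -> : c / a * a ^+ 2 + (c / a)^-1 * c ^+ 2 = 2 * (a * c).
  by field; rewrite ap cp.
lra.
Qed.

Lemma minkowski u v : Rep u -> Rep v ->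
  Num.sqrt (Q (fun t => u t + v t)) <= Num.sqrt (Q u) + Num.sqrt (Q v).
Proof.
move=> Hu Hv; rewrite Q_add //.
set B := J _.
have HB : B <= Num.sqrt (Q u) * Num.sqrt (Q v).
  apply: cs_real; rewrite ?sqrtr_ge0 // => m m0.
  by rewrite !sqr_sqrtr ?Q_ge0 //; exact: Q_cross.
rewrite -(ger0_norm (addr_ge0 (sqrtr_ge0 (Q u)) (sqrtr_ge0 (Q v)))) -sqrtr_sqr.
rewrite ler_sqrt ?sqr_ge0 //.
have E : (Num.sqrt (Q u) + Num.sqrt (Q v)) ^+ 2 =
  Num.sqrt (Q u) ^+ 2 + 2 * (Num.sqrt (Q u) * Num.sqrt (Q v)) + Num.sqrt (Q v) ^+ 2 by ring.
rewrite E !sqr_sqrtr ?Q_ge0 //; lra.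
Qed.

Lemma Q_dom h u : Rep h -> Rep u -> (forall t, abs2 (h t) <= 1) ->
  Num.sqrt (Q (fun t => h t * u t)) <= Num.sqrt (Q u).
Proof.
move=> Hh Hu H1; rewrite ler_sqrt ?Q_ge0 //; apply: Jle.
- exact: nice_abs2 (RepM Hh Hu).
- exact: nice_abs2.
- move=> t; rewrite abs2_mul; apply: ler_piMl; [exact: abs2_ge0|exact: H1].
Qed.
Definition sg (Fk : C) : C := ((Num.sqrt (1 + abs2 Fk))^-1)%:C.

Lemma mul2E (A B : 'M[C]_2) i j : (A * B) i j = A i 0 * B 0 j + A i 1 * B 1 j.
Proof.
rewrite -mulmxE mxE big_ord_recl big_ord_recl big_ord0 addr0.
by have -> : lift ord0 (ord0 : 'I_1) = 1 :> 'I_2 by apply/val_inj.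
Qed.

Lemma fac00 Fk k z : nlft_factor Fk k z 0 0 = sg Fk.
Proof. by rewrite /nlft_factor !mxE /= mulr1. Qed.
Lemma fac01 Fk k z : nlft_factor Fk k z 0 1 = sg Fk * (Fk * z ^ k).
Proof. by rewrite /nlft_factor !mxE /=. Qed.
Lemma fac10 Fk k z : nlft_factor Fk k z 1 0 = sg Fk * (- conjc Fk * z ^ (- k)).
Proof. by rewrite /nlft_factor !mxE /=. Qed.
Lemma fac11 Fk k z : nlft_factor Fk k z 1 1 = sg Fk.
Proof. by rewrite /nlft_factor !mxE /= mulr1. Qed.

Definition Pn (F : int -> C) (N n : nat) (z : C) : 'M[C]_2 :=
  \prod_(i < n) nlft_factor (F (i%:Z - N%:Z)) (i%:Z - N%:Z) z.

Lemma Pn0 F N z : Pn F N 0 z = 1.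
Proof. by rewrite /Pn big_ord0. Qed.

Lemma PnS F N n z : Pn F N n.+1 z = Pn F N n z * nlft_factor (F (n%:Z - N%:Z)) (n%:Z - N%:Z) z.
Proof. by rewrite /Pn big_ord_recr. Qed.

Lemma nlftE N F : nlft N F = (fun z => Pn F N (N + N).+1 z 0 0, fun z => Pn F N (N + N).+1 z 0 1).
Proof. by []. Qed.

Lemma conjcD (x y : C) : conjc (x + y) = conjc x + conjc y.
Proof. by case: x; case: y => * /=; congr Complex; ring. Qed.
Lemma conjcM (x y : C) : conjc (x * y) = conjc x * conjc y.
Proof. by case: x; case: y => * /=; congr Complex; ring. Qed.
Lemma conjcN (x : C) : conjc (- x) = - conjc x.
Proof. by case: x => * /=. Qed.
Lemma conjcKK (x : C) : conjc (conjc x) = x.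
Proof. by case: x => * /=; rewrite opprK. Qed.
Lemma conjc1' : conjc (1 : C) = 1.
Proof. by rewrite /= oppr0. Qed.
Lemma conjc0' : conjc (0 : C) = 0.
Proof. by rewrite /= oppr0. Qed.
Lemma conj_sg Fk : conjc (sg Fk) = sg Fk.
Proof. by rewrite /sg /= oppr0. Qed.

Lemma sg_norm Fk : sg Fk * sg Fk * (1 + Fk * conjc Fk) = 1.
Proof.
rewrite -abs2E /sg -rmorphM -(rmorph1 (real_complex R)) -rmorphD -rmorphM; congr (_%:C).
have h : 0 < 1 + abs2 Fk by rewrite ltr_pwDl // abs2_ge0.
rewrite -expr2 exprVn sqr_sqrtr ?mulVf ?ltW // gt_eqF //.
Qed.

Lemma eTXK (t : R) (k : int) : eT t ^ k * eT t ^ (- k) = 1.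
Proof. by rewrite -eTXD subrr expr0z. Qed.

Lemma Pn_unit (F : int -> C) (N n : nat) (t : R) :
  let P := Pn F N n (eT t) in
  P 1 0 = - conjc (P 0 1) /\ P 1 1 = conjc (P 0 0) /\
  P 0 0 * conjc (P 0 0) + P 0 1 * conjc (P 0 1) = 1.
Proof.
elim: n => [|n IH] /=.
  rewrite Pn0 !mxE /= !oppr0; split; first by []; split; first by [].
  by rewrite mul0r addr0 mul1r.
move: IH => /= [H10 [H11 H]].
rewrite PnS !mul2E fac00 fac01 fac10 fac11 H10 H11.
set a := Pn F N n (eT t) 0 0 in H *; set b := Pn F N n (eT t) 0 1 in H *.
set Fk := F _; set k := (_ - _)%R.
have hw := eTXK t k; have hw' := eTXJ t k; have hw'' := eTXJ t (- k).
rewrite opprK in hw''.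
rewrite !(conjcD, conjcM, conjcN, conjcKK, conj_sg, hw', hw'').
split; first by ring.
split; first by ring.
have -> : (a * sg Fk + b * (sg Fk * (- conjc Fk * eT t ^ (- k)))) *
    (conjc a * sg Fk + conjc b * (sg Fk * (- Fk * eT t ^ k))) +
    (a * (sg Fk * (Fk * eT t ^ k)) + b * sg Fk) *
    (conjc a * (sg Fk * (conjc Fk * eT t ^ (- k))) + conjc b * sg Fk)
  = (sg Fk * sg Fk * (1 + Fk * conjc Fk)) * (a * conjc a + b * conjc b)
    + sg Fk * sg Fk * Fk * conjc Fk * (a * conjc a + b * conjc b) * (eT t ^ k * eT t ^ (- k) - 1) by ring.
by rewrite sg_norm H hw subrr !mulr0 addr0 mul1r.
Qed.

Lemma all_sh (A B : pred int) c e s :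
  (forall e', A e' -> B (e' + e)) -> all (fun x => A x.2) s -> all (fun x => B x.2) (sh c e s).
Proof.
move=> H; rewrite /sh all_map; apply: sub_all => x /= Ax; exact: H.
Qed.

Lemma sg_pos Fk : sg Fk = ((Num.sqrt (1 + abs2 Fk))^-1)%:C /\ 0 < (Num.sqrt (1 + abs2 Fk))^-1.
Proof.
split => //; rewrite invr_gt0 sqrtr_gt0 ltr_pwDl // abs2_ge0 //.
Qed.

Lemma ev1 c e t : ev [:: (c, e)] t = c * eT t ^ e.
Proof. by rewrite /ev big_cons big_nil addr0. Qed.

Definition Inv (A B : pred int) (a b : R -> C) :=
  exists al s1 s2, [/\ 0 < al, all (fun x => A x.2) s1, all (fun x => B x.2) s2 &
     forall t, a t = al%:C + ev s1 t /\ b t = ev s2 t].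

Lemma step (A B A' B' : pred int) (Fk : C) (k : int) (a b : R -> C) :
  Inv A B a b ->
  (forall e, A e -> A' e) -> (forall e, B e -> B' e) ->
  (Fk != 0 -> [/\ forall e, B e -> A' (e - k), B' k & forall e, A e -> B' (e + k)]) ->
  Inv A' B' (fun t => a t * sg Fk + b t * (sg Fk * (- conjc Fk * eT t ^ (- k))))
            (fun t => a t * (sg Fk * (Fk * eT t ^ k)) + b t * sg Fk).
Proof.
case=> al [s1 [s2 [al0 As1 Bs2 E]]] AA BB HF.
have [Fk0|F0] := eqVneq Fk 0.
  rewrite Fk0.
  have [sgE s0] := sg_pos 0; set s := (Num.sqrt _)^-1 in sgE s0.
  exists (al * s), (sh (sg 0) 0 s1), (sh (sg 0) 0 s2); split.
  - exact: mulr_gt0.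
  - by apply: all_sh As1 => e' /AA; rewrite addr0.
  - by apply: all_sh Bs2 => e' /BB; rewrite addr0.
  - move=> t; have [-> ->] := E t; rewrite !ev_sh !expr0z !mulr1 sgE conjc0' rmorphM /=.
    split; ring.
have [HB HBk HA] := HF F0.
have [sgE s0] := sg_pos Fk; set s := (Num.sqrt _)^-1 in sgE s0.
exists (al * s), (sh (sg Fk) 0 s1 ++ sh (sg Fk * - conjc Fk) (- k) s2),
  ([:: (al%:C * sg Fk * Fk, k)] ++ sh (sg Fk * Fk) k s1 ++ sh (sg Fk) 0 s2); split.
- exact: mulr_gt0.
- rewrite all_cat; apply/andP; split.
    by apply: all_sh As1 => e' /AA; rewrite addr0.
  by apply: all_sh Bs2 => e' /HB.
- rewrite !all_cat /= HBk /=; apply/andP; split.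
    by apply: all_sh As1 => e' /HA.
  by apply: all_sh Bs2 => e' /BB; rewrite addr0.
- move=> t; have [-> ->] := E t; rewrite !ev_cat !ev_sh ev1 !expr0z !mulr1 sgE rmorphM /=.
  split; ring.
Qed.

Lemma Inv_ext A B f g f' g' : (forall t, f t = f' t) -> (forall t, g t = g' t) ->
  Inv A B f g -> Inv A B f' g'.
Proof.
move=> Hf Hg [al [s1 [s2 [h1 h2 h3 h4]]]]; exists al, s1, s2; split => // t.
by rewrite -Hf -Hg.
Qed.

Lemma Pn_inv (F : int -> C) (N : nat) (An Bn : nat -> pred int) :
  (forall n e, An n e -> An n.+1 e) -> (forall n e, Bn n e -> Bn n.+1 e) ->
  (forall n, F (n%:Z - N%:Z) != 0 ->
     [/\ forall e, Bn n e -> An n.+1 (e - (n%:Z - N%:Z)), Bn n.+1 (n%:Z - N%:Z)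
       & forall e, An n e -> Bn n.+1 (e + (n%:Z - N%:Z))]) ->
  forall n, Inv (An n) (Bn n) (fun t => Pn F N n (eT t) 0 0) (fun t => Pn F N n (eT t) 0 1).
Proof.
move=> HA HB HF; elim => [|n IH].
  exists 1, [::], [::]; split => // t; rewrite Pn0 !mxE /= ev_nil; split => //.
  by rewrite addr0.
apply: (Inv_ext _ _ (step IH (HA n) (HB n) (HF n))) => t.
  by rewrite PnS mul2E fac00 fac10.
by rewrite PnS mul2E fac01 fac11.
Qed.

Lemma all_pm (A B P : pred int) s1 s2 :
  (forall e1 e2, A e1 -> B e2 -> P (e2 + e1)) ->
  all (fun x => A x.2) s1 -> all (fun x => B x.2) s2 -> all (fun x => P x.2) (pm s1 s2).
Proof.
move=> H; elim: s1 => [|x s1 IH] //= /andP[Ax As1] Bs2.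
rewrite all_cat IH // andbT; apply: all_sh Bs2 => e' Be'; exact: H.
Qed.

Lemma all_cj (A B : pred int) s :
  (forall e, A e -> B (- e)) -> all (fun x => A x.2) s -> all (fun x => B x.2) (cj s).
Proof. by move=> H As; rewrite /cj all_map; apply: sub_all As => x /= /H. Qed.

Lemma J_const (c : R) s : all (fun x => x.2 != 0) s ->
  J (fun t => reC (c%:C + ev s t)) = c.
Proof.
move=> Hs.
rewrite (J_ext (g := fun t => reC (ev ((c%:C, 0) :: s) t))); last first.
  by move=> t; rewrite /ev big_cons expr0z mulr1.
rewrite /J; have [_ ->] := ev_int ((c%:C, 0) :: s).
rewrite big_cons eqxx /= big_seq_cond big1 ?addr0 // => x /andP[xs x0].
by move: (allP Hs x xs); rewrite x0.
Qed.

Lemma Pn_abs (F : int -> C) (N n : nat) (t : R) :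
  abs2 (Pn F N n (eT t) 0 0) <= 1 /\ abs2 (Pn F N n (eT t) 0 1) <= 1.
Proof.
have [_ [_ H]] := Pn_unit F N n t.
have E : abs2 (Pn F N n (eT t) 0 0) + abs2 (Pn F N n (eT t) 0 1) = 1.
  by apply: complexI; rewrite rmorphD /= !abs2E H.
have h1 := abs2_ge0 (Pn F N n (eT t) 0 0); have h2 := abs2_ge0 (Pn F N n (eT t) 0 1).
split; lra.
Qed.

Lemma threshold (N : nat) (F G : int -> C) :
  supported_in N F -> supported_in N G -> supp_left F G ->
  exists p : int, (forall j, F j != 0 -> j <= p) /\ (forall k, G k != 0 -> p < k).
Proof.
move=> sF sG lFG.
have bnd : forall (H : int -> C) j, supported_in N H -> H j != 0 -> (`|j| <= N)%N.
  move=> H j sH Hj; rewrite leqNgt; apply/negP => /sH; exact/eqP.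
case: (pselect (exists j, F j != 0)) => [[j0 Fj0]|nF].
  pose P := fun n : nat => F (n%:Z - N%:Z) != 0.
  have exP : exists n, P n.
    exists (absz (j0 + N%:Z)); rewrite /P gez0_abs; last by have := bnd F j0 sF Fj0; lia.
    by rewrite addrK.
  have bP : forall n, P n -> (n <= N + N)%N.
    by move=> n /(bnd F _ sF) => h; lia.
  case: (ex_maxnP exP bP) => i Pi imax.
  exists (i%:Z - N%:Z); split.
    move=> j Fj; have := bnd F j sF Fj => hj.
    have Pj : P (absz (j + N%:Z)) by rewrite /P gez0_abs ?addrK //; lia.
    have := imax _ Pj; lia.
  by move=> k Gk; apply: lFG; [move/eqP: Pi|move/eqP: Gk].
exists (- (N%:Z) - 1); split.
  by move=> j Fj; exfalso; apply: nF; exists j.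
by move=> k Gk; have := bnd G k sG Gk; lia.
Qed.

Lemma Inv_mono (A B A' B' : pred int) f g : (forall e, A e -> A' e) -> (forall e, B e -> B' e) ->
  Inv A B f g -> Inv A' B' f g.
Proof.
move=> HA HB [al [s1 [s2 [h1 h2 h3 h4]]]]; exists al, s1, s2; split => //.
  by apply: sub_all h2 => x /HA.
by apply: sub_all h3 => x /HB.
Qed.

Lemma inv_upper (N : nat) (F : int -> C) (q : int) : (forall j, F j != 0 -> j <= q) ->
  Inv (fun e => e < 0) (fun e => e <= q)
    (fun t => Pn F N (N + N).+1 (eT t) 0 0) (fun t => Pn F N (N + N).+1 (eT t) 0 1).
Proof.
move=> Hq.
have := @Pn_inv F N (fun _ e => e < 0) (fun n e => (e < n%:Z - N%:Z) && (e <= q)).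
move=> /(_ _ _ _ (N + N).+1) H; apply: Inv_mono (H _ _ _) => //.
- by move=> e /andP[].
- by move=> n e /andP[h1 h2]; apply/andP; split => //; lia.
- move=> n /Hq hk; split.
  + by move=> e /andP[h1 h2]; lia.
  + by apply/andP; split => //; lia.
  + by move=> e h; apply/andP; split; lia.
Qed.

Lemma inv_lower (N : nat) (G : int -> C) (r : int) : (forall k, G k != 0 -> r <= k) ->
  Inv (fun e => e < 0) (fun e => r <= e)
    (fun t => Pn G N (N + N).+1 (eT t) 0 0) (fun t => Pn G N (N + N).+1 (eT t) 0 1).
Proof.
move=> Hr.
have := @Pn_inv G N (fun n e => (r - (n%:Z - N%:Z) < e) && (e < 0))
                    (fun n e => (r <= e) && (e < n%:Z - N%:Z)).
move=> /(_ _ _ _ (N + N).+1) H; apply: Inv_mono (H _ _ _) => //.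
- by move=> e /andP[].
- by move=> e /andP[].
- by move=> n e /andP[h1 h2]; apply/andP; split => //; lia.
- by move=> n e /andP[h1 h2]; apply/andP; split => //; lia.
- move=> n /Hr hk; split.
  + by move=> e /andP[h1 h2]; apply/andP; split; lia.
  + by apply/andP; split => //; lia.
  + by move=> e /andP[h1 h2]; apply/andP; split; lia.
Qed.

Lemma Q_opp u : Q (fun t => - u t) = Q u.
Proof. by apply: Q_ext => t; rewrite abs2_opp. Qed.
Lemma Q_conj u : Q (fun t => conjc (u t)) = Q u.
Proof. by apply: Q_ext => t; rewrite abs2_conj. Qed.

Lemma mink4 u1 u2 u3 u4 : Rep u1 -> Rep u2 -> Rep u3 -> Rep u4 ->
  Num.sqrt (Q (fun t => (u1 t + u2 t) + (u3 t + u4 t))) <=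
  Num.sqrt (Q u1) + Num.sqrt (Q u2) + Num.sqrt (Q u3) + Num.sqrt (Q u4).
Proof.
move=> h1 h2 h3 h4.
have := minkowski (RepD h1 h2) (RepD h3 h4).
have := minkowski h1 h2; have := minkowski h3 h4; lra.
Qed.

Lemma L2_first a b c d a' b' c' d' :
  Rep a -> Rep b -> Rep c -> Rep d -> Rep a' -> Rep b' -> Rep c' -> Rep d' ->
  (forall t, abs2 (c t) <= 1) -> (forall t, abs2 (d t) <= 1) ->
  (forall t, abs2 (a' t) <= 1) -> (forall t, abs2 (b' t) <= 1) ->
  Num.sqrt (Q (fun t => (a t * c t - b t * conjc (d t)) - (a' t * c' t - b' t * conjc (d' t)))) <=
  Num.sqrt (Q (fun t => a t - a' t)) + Num.sqrt (Q (fun t => b t - b' t))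
  + Num.sqrt (Q (fun t => c t - c' t)) + Num.sqrt (Q (fun t => d t - d' t)).
Proof.
move=> ra rb rc rd ra' rb' rc' rd' hc hd ha' hb'.
have E : forall t, (a t * c t - b t * conjc (d t)) - (a' t * c' t - b' t * conjc (d' t)) =
  (c t * (a t - a' t) + a' t * (c t - c' t)) +
  (- (conjc (d t) * (b t - b' t)) + - (b' t * conjc (d t - d' t))).
  by move=> t; rewrite conjcD conjcN; ring.
rewrite (Q_ext (v := fun t => (c t * (a t - a' t) + a' t * (c t - c' t)) +
  (- (conjc (d t) * (b t - b' t)) + - (b' t * conjc (d t - d' t))))); last by move=> t; rewrite E.
have := mink4 (RepM rc (RepB ra ra')) (RepM ra' (RepB rc rc'))
  (RepN (RepM (RepJ rd) (RepB rb rb'))) (RepN (RepM rb' (RepJ (RepB rd rd')))).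
rewrite !Q_opp.
have := Q_dom rc (RepB ra ra') hc.
have := Q_dom ra' (RepB rc rc') ha'.
have hd' : forall t, abs2 (conjc (d t)) <= 1 by move=> t; rewrite abs2_conj.
have := Q_dom (RepJ rd) (RepB rb rb') hd'.
have := Q_dom rb' (RepJ (RepB rd rd')) hb'.
rewrite (Q_conj (fun t => d t - d' t)).
lra.
Qed.

Lemma L2_second a b c d a' b' c' d' :
  Rep a -> Rep b -> Rep c -> Rep d -> Rep a' -> Rep b' -> Rep c' -> Rep d' ->
  (forall t, abs2 (c t) <= 1) -> (forall t, abs2 (d t) <= 1) ->
  (forall t, abs2 (a' t) <= 1) -> (forall t, abs2 (b' t) <= 1) ->
  Num.sqrt (Q (fun t => (a t * d t + b t * conjc (c t)) - (a' t * d' t + b' t * conjc (c' t)))) <=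
  Num.sqrt (Q (fun t => a t - a' t)) + Num.sqrt (Q (fun t => b t - b' t))
  + Num.sqrt (Q (fun t => c t - c' t)) + Num.sqrt (Q (fun t => d t - d' t)).
Proof.
move=> ra rb rc rd ra' rb' rc' rd' hc hd ha' hb'.
rewrite (Q_ext (v := fun t => (d t * (a t - a' t) + a' t * (d t - d' t)) +
  ((conjc (c t) * (b t - b' t)) + (b' t * conjc (c t - c' t))))); last first.
  by move=> t; congr abs2; rewrite conjcD conjcN; ring.
have := mink4 (RepM rd (RepB ra ra')) (RepM ra' (RepB rd rd'))
  (RepM (RepJ rc) (RepB rb rb')) (RepM rb' (RepJ (RepB rc rc'))).
have := Q_dom rd (RepB ra ra') hd.
have := Q_dom ra' (RepB rd rd') ha'.
have hc' : forall t, abs2 (conjc (c t)) <= 1 by move=> t; rewrite abs2_conj.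
have := Q_dom (RepJ rc) (RepB rb rb') hc'.
have := Q_dom rb' (RepJ (RepB rc rc')) hb'.
rewrite (Q_conj (fun t => c t - c' t)).
lra.
Qed.

Lemma L2T_Q (f : C -> C) : L2T f = Num.sqrt (Q (fun t => f (eT t))).
Proof. by rewrite /L2T unit_intervalE. Qed.

Lemma at_infty_re (f : C -> C) : reC (at_infty f) = J (fun t => reC (f (eT t))).
Proof. by rewrite /at_infty /intT unit_intervalE. Qed.

Lemma fstarE (d : C -> C) (t : R) : fstar d (eT t) = conjc (d (eT t)).
Proof. by rewrite /fstar eTV. Qed.

Lemma Inv_Rep A B f g : Inv A B f g -> Rep f /\ Rep g.
Proof.
case=> al [s1 [s2 [_ _ _ H]]]; split.
  by exists ((al%:C, 0) :: s1) => t; have [-> _] := H t; rewrite /ev big_cons expr0z mulr1.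
by exists s2 => t; have [_ ->] := H t.
Qed.

Lemma infty_prod (N : nat) (F G : int -> C) (p : int) :
  (forall j, F j != 0 -> j <= p) -> (forall k, G k != 0 -> p < k) ->
  exists al ga, [/\ 0 < al, 0 < ga,
    J (fun t => reC (Pn F N (N + N).+1 (eT t) 0 0)) = al,
    J (fun t => reC (Pn G N (N + N).+1 (eT t) 0 0)) = ga &
    J (fun t => reC (Pn F N (N + N).+1 (eT t) 0 0 * Pn G N (N + N).+1 (eT t) 0 0
        - Pn F N (N + N).+1 (eT t) 0 1 * conjc (Pn G N (N + N).+1 (eT t) 0 1))) = al * ga].
Proof.
move=> hF hG.
have [al [sa [sb [al0 Asa Bsb EF]]]] := inv_upper N hF.
have hG' : forall k, G k != 0 -> p + 1 <= k by move=> k /hG; lia.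
have [ga [sc [sd [ga0 Asc Bsd EG]]]] := inv_lower N hG'.
have nz : forall s, all (fun x : C * int => x.2 < 0) s -> all (fun x => x.2 != 0) s.
  by move=> s; apply: sub_all => x /= h; rewrite lt_eqF.
exists al, ga; split => //.
- rewrite (J_ext (g := fun t => reC (al%:C + ev sa t))); first exact: J_const (nz _ Asa).
  by move=> t; have [-> _] := EF t.
- rewrite (J_ext (g := fun t => reC (ga%:C + ev sc t))); first exact: J_const (nz _ Asc).
  by move=> t; have [-> _] := EG t.
pose S := sh al%:C 0 sc ++ sh ga%:C 0 sa ++ pm sa sc ++ sh (-1) 0 (pm sb (cj sd)).
rewrite (J_ext (g := fun t => reC ((al * ga)%:C + ev S t))).
  apply: J_const; rewrite !all_cat; apply/and4P; split.
  - by apply: (@all_sh (fun e => e < 0) (fun e => e != 0)) Asc => e h; rewrite addr0 lt_eqF.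
  - by apply: (@all_sh (fun e => e < 0) (fun e => e != 0)) Asa => e h; rewrite addr0 lt_eqF.
  - apply: (@all_pm (fun e => e < 0) (fun e => e < 0) (fun e => e != 0)) => // e1 e2 h1 h2.
    rewrite lt_eqF //; lia.
  - apply: (@all_sh (fun e => e < 0) (fun e => e != 0)); first by move=> e h; rewrite addr0 lt_eqF.
    apply: (@all_pm (fun e => e <= p) (fun e => e <= - (p + 1)) (fun e => e < 0)) => //.
      by move=> e1 e2 h1 h2; lia.
    by apply: (@all_cj (fun e => p + 1 <= e) (fun e => e <= - (p + 1))) Bsd => e h; lia.
move=> t; have [-> ->] := EF t; have [-> ->] := EG t.
rewrite /S !ev_cat !ev_sh ev_pm ev_pm ev_cj !expr0z !mulr1 rmorphM /=; congr reC; ring.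
Qed.

Lemma L2_first' a b c d a' b' c' d' e e' :
  Rep a -> Rep b -> Rep c -> Rep d -> Rep a' -> Rep b' -> Rep c' -> Rep d' ->
  (forall t, abs2 (c t) <= 1) -> (forall t, abs2 (d t) <= 1) ->
  (forall t, abs2 (a' t) <= 1) -> (forall t, abs2 (b' t) <= 1) ->
  (forall t, e t = conjc (d t)) -> (forall t, e' t = conjc (d' t)) ->
  Num.sqrt (Q (fun t => (a t * c t - b t * e t) - (a' t * c' t - b' t * e' t))) <=
  Num.sqrt (Q (fun t => a t - a' t)) + Num.sqrt (Q (fun t => b t - b' t))
  + Num.sqrt (Q (fun t => c t - c' t)) + Num.sqrt (Q (fun t => d t - d' t)).
Proof.
move=> ra rb rc rd ra' rb' rc' rd' hc hd ha' hb' He He'.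
rewrite (Q_ext (v := fun t => (a t * c t - b t * conjc (d t)) - (a' t * c' t - b' t * conjc (d' t)))).
  exact: L2_first.
by move=> t; rewrite He He'.
Qed.

Lemma L2_second' a b c d a' b' c' d' e e' :
  Rep a -> Rep b -> Rep c -> Rep d -> Rep a' -> Rep b' -> Rep c' -> Rep d' ->
  (forall t, abs2 (c t) <= 1) -> (forall t, abs2 (d t) <= 1) ->
  (forall t, abs2 (a' t) <= 1) -> (forall t, abs2 (b' t) <= 1) ->
  (forall t, e t = conjc (c t)) -> (forall t, e' t = conjc (c' t)) ->
  Num.sqrt (Q (fun t => (a t * d t + b t * e t) - (a' t * d' t + b' t * e' t))) <=
  Num.sqrt (Q (fun t => a t - a' t)) + Num.sqrt (Q (fun t => b t - b' t))
  + Num.sqrt (Q (fun t => c t - c' t)) + Num.sqrt (Q (fun t => d t - d' t)).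
Proof.
move=> ra rb rc rd ra' rb' rc' rd' hc hd ha' hb' He He'.
rewrite (Q_ext (v := fun t => (a t * d t + b t * conjc (c t)) - (a' t * d' t + b' t * conjc (c' t)))).
  exact: L2_second.
by move=> t; rewrite He He'.
Qed.

Lemma final_arith (x1 x2 a b c d la lc l : R) :
  x1 <= a + b + c + d -> x2 <= a + b + c + d -> l <= la + lc -> 0 <= lc -> 0 <= la ->
  x1 + x2 + l <= 2 * (a + b + la) + 2 * (c + d + lc).
Proof. move=> *; lra. Qed.

Lemma final2 (x1 x2 a b c d al ga al' ga' r1 r2 ra ra' rc rc' : R) :
  x1 <= a + b + c + d -> x2 <= a + b + c + d ->
  0 < al -> 0 < ga -> 0 < al' -> 0 < ga' ->
  r1 = al * ga -> r2 = al' * ga' -> ra = al -> ra' = al' -> rc = ga -> rc' = ga' ->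
  x1 + x2 + `|ln r1 - ln r2| <= 2 * (a + b + `|ln ra - ln ra'|) + 2 * (c + d + `|ln rc - ln rc'|).
Proof.
move=> h1 h2 p1 p2 p3 p4 -> -> -> -> -> ->.
rewrite !lnM ?posrE //.
have Nl : `|ln al + ln ga - (ln al' + ln ga')| <= `|ln al - ln al'| + `|ln ga - ln ga'|.
  have -> : ln al + ln ga - (ln al' + ln ga') = (ln al - ln al') + (ln ga - ln ga') by ring.
  exact: ler_normD.
have := normr_ge0 (ln al - ln al'); have := normr_ge0 (ln ga - ln ga').
lra.
Qed.

Lemma Rep_Pn (F : int -> C) (N n : nat) :
  Rep (fun t => Pn F N n (eT t) 0 0) /\ Rep (fun t => Pn F N n (eT t) 0 1).
Proof.
have H := @Pn_inv F N (fun _ _ => true) (fun _ _ => true) (fun _ _ _ => erefl) (fun _ _ _ => erefl)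
  (fun n _ => And3 (fun _ _ => erefl) erefl (fun _ _ => erefl)) n.
exact: Inv_Rep H.
Qed.
End S.

Unset Implicit Arguments.
Local Close Scope complex_scope.

Theorem theorem6p1 (R : realType) (N : nat) (F Ft G Gt : int -> R[i]) :
  supported_in N F -> supported_in N Ft -> supported_in N G -> supported_in N Gt ->
  supp_left F G -> supp_left F Gt -> supp_left Ft G -> supp_left Ft Gt ->
  rho (pairmul (nlft N F) (nlft N G)) (pairmul (nlft N Ft) (nlft N Gt))
  <= 2 * rho (nlft N F) (nlft N Ft) + 2 * rho (nlft N G) (nlft N Gt).
Proof.
move=> sF sFt sG sGt lFG _ _ lFtGt.
have [p [hpF hpG]] := threshold sF sG lFG.
have [q [hqF hqG]] := threshold sFt sGt lFtGt.
have [al [ga [al0 ga0 Ja Jc Jac]]] := infty_prod N hpF hpG.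
have [al' [ga' [al0' ga0' Ja' Jc' Jac']]] := infty_prod N hqF hqG.
pose M := (N + N).+1.
have RR : forall X : int -> R[i], Rep (fun t => nlft_mat N X (eT t) 0 0) /\ Rep (fun t => nlft_mat N X (eT t) 0 1).
  move=> X; exact: Rep_Pn X N M.
have BB : forall (X : int -> R[i]) t, abs2 (nlft_mat N X (eT t) 0 0) <= 1 /\ abs2 (nlft_mat N X (eT t) 0 1) <= 1.
  move=> X t; exact: Pn_abs X N M t.
have [RaF RbF] := RR F; have [RaFt RbFt] := RR Ft.
have [RcG RdG] := RR G; have [RcGt RdGt] := RR Gt.
have L1 := L2_first' RaF RbF RcG RdG RaFt RbFt RcGt RdGt
  (fun t => (BB G t).1) (fun t => (BB G t).2) (fun t => (BB Ft t).1) (fun t => (BB Ft t).2)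
  (fun t => fstarE (fun z => nlft_mat N G z 0 1) t) (fun t => fstarE (fun z => nlft_mat N Gt z 0 1) t).
have L2 := L2_second' RaF RbF RcG RdG RaFt RbFt RcGt RdGt
  (fun t => (BB G t).1) (fun t => (BB G t).2) (fun t => (BB Ft t).1) (fun t => (BB Ft t).2)
  (fun t => fstarE (fun z => nlft_mat N G z 0 0) t) (fun t => fstarE (fun z => nlft_mat N Gt z 0 0) t).
have Ja2 : J (fun t => reC (nlft_mat N F (eT t) 0 0)) = al := Ja.
have Ja2' : J (fun t => reC (nlft_mat N Ft (eT t) 0 0)) = al' := Ja'.
have Jc2 : J (fun t => reC (nlft_mat N G (eT t) 0 0)) = ga := Jc.
have Jc2' : J (fun t => reC (nlft_mat N Gt (eT t) 0 0)) = ga' := Jc'.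
have JacE : J (fun t => reC (nlft_mat N F (eT t) 0 0 * nlft_mat N G (eT t) 0 0 -
   nlft_mat N F (eT t) 0 1 * fstar (fun z => nlft_mat N G z 0 1) (eT t))) = al * ga.
  by rewrite -Jac; apply: J_ext => t; rewrite fstarE.
have JacE' : J (fun t => reC (nlft_mat N Ft (eT t) 0 0 * nlft_mat N Gt (eT t) 0 0 -
   nlft_mat N Ft (eT t) 0 1 * fstar (fun z => nlft_mat N Gt z 0 1) (eT t))) = al' * ga'.
  by rewrite -Jac'; apply: J_ext => t; rewrite fstarE.
rewrite /rho /pairmul /nlft !L2T_Q.
apply: (final2 L1 L2 al0 ga0 al0' ga0').
- by rewrite at_infty_re.
- by rewrite at_infty_re.
- by rewrite at_infty_re.
- by rewrite at_infty_re.
- by rewrite at_infty_re.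
- by rewrite at_infty_re.
Qed.
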